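(* Let $n\ge 1$ and let $\pi$ be a permutation of length $n$ that has a distant inverse-descent. Then $\zeta_n$ contains a subsequence order-isomorphic to $\pi$.
   Context: A permutation of length $n$ is a word containing each letter of $[n]=\{1,\dots,n\}$ exactly once. Two words $u,v$ of the same length $k$ over the positive integers are order-isomorphic if for all $i,j\in[k]$, $u(i)>u(j)\iff v(i)>v(j)$. A word $w$ contains a subsequence order-isomorphic to $\pi$ if there are indices $i_1<\cdots<i_n$ with $w(i_1)\cdots w(i_n)$ order-isomorphic to $\pi$. Entries $\pi(j),\pi(k)$ form an inverse-descent if $j<k$ and $\pi(j)=\pi(k)+1$; it is a distant inverse-descent if moreover $k\ge j+2$. The word $z_n$ is the concatenation of $n$ runs $r_1r_2\cdots r_n$, where for odd $k$ the run $r_k$ lists the odd integers in $[n]$ in increasing order and for even $k$ the run $r_k$ lists the even integers in $[n]$ in decreasing order (so $|z_n|=n^2/2$ for even $n$ and $(n^2+1)/2$ for odd $n$). The permutation $\zeta_n$ of length $|z_n|$ is the unique permutation such that for all indices $i\ne j$: $\zeta_n(i)>\zeta_n(j)$ if and only if either $z_n(i)>z_n(j)$, or $z_n(i)=z_n(j)$ and $i<j$. *)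

(* Defs.v *)
From mathcomp Require Import all_boot.
Set Implicit Arguments. Unset Strict Implicit. Unset Printing Implicit Defensive.

(* Words are sequences of naturals; positions are 0-indexed internally. *)

Definition is_perm (n : nat) (p : seq nat) : bool := perm_eq p (iota 1 n).

Definition order_iso (u v : seq nat) : bool :=
  (size u == size v) &&
  [forall i : 'I_(size u), forall j : 'I_(size u),
     (nth 0 u j < nth 0 u i) == (nth 0 v j < nth 0 v i)].

Definition contains (w p : seq nat) : Prop :=
  exists m : bitseq, size m = size w /\ order_iso (mask m w) p.

Definition has_distant_inv_descent (p : seq nat) : Prop :=
  exists j k, j.+2 <= k /\ k < size p /\ nth 0 p j = (nth 0 p k).+1.

Definition zrun (n k : nat) : seq nat :=
  if odd k then [seq i <- iota 1 n | odd i]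
  else rev [seq i <- iota 1 n | ~~ odd i].

Definition z_word (n : nat) : seq nat :=
  flatten [seq zrun n k | k <- iota 1 n].

(* zeta_n(i) = 1 + #{ j : z(j) < z(i) or (z(j) = z(i) and i < j) };
   this is the standardization of z_n described in the paper *)
Definition zeta (n : nat) : seq nat :=
  let z := z_word n in
  [seq (count (fun j => (nth 0 z j < nth 0 z i) ||
                        ((nth 0 z j == nth 0 z i) && (i < j)))
              (iota 0 (size z))).+1
  | i <- iota 0 (size z)].

(* Main.v *)
Require Import Defs.
From mathcomp Require Import all_boot.
From mathcomp Require Import zify.
Set Implicit Arguments. Unset Strict Implicit.


Section ZetaOrder.
Variable z : nat -> nat.
Definition Pz (i j : nat) : bool := (z j < z i) || ((z j == z i) && (i < j)).

Lemma Pz_trans a b c : Pz a b -> Pz b c -> Pz a c.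
Proof.
rewrite /Pz => /orP[h|/andP[/eqP e h]] /orP[h'|/andP[/eqP e' h']]; apply/orP.
- left; lia.
- left; lia.
- left; lia.
- right; apply/andP; split; [apply/eqP; lia | lia].
Qed.

Lemma Pz_irr a : Pz a a = false.
Proof. by rewrite /Pz ltnn eqxx ltnn. Qed.

Lemma Pz_total a b : a != b -> Pz a b || Pz b a.
Proof.
move=> /eqP ne; rewrite /Pz.
case: (ltngtP (z b) (z a)) => h //=.
apply/orP; lia.
Qed.

Lemma count_strict (T : eqType) (a1 a2 : pred T) (s : seq T) x :
  subpred a1 a2 -> x \in s -> a2 x -> ~~ a1 x -> count a1 s < count a2 s.
Proof.
move=> sub; elim: s => // y s IH; rewrite in_cons => /orP[/eqP <-|xs] h2 h1 /=.
  rewrite h2 (negbTE h1) add0n add1n ltnS; exact: sub_count.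
have := IH xs h2 h1.
case e: (a1 y); first by rewrite (sub _ e) /= => h; lia.
case: (a2 y) => /= h; lia.
Qed.

Variable N : nat.
Definition Fz i := (count (Pz i) (iota 0 N)).+1.

Lemma Fz_lt i1 i2 : i1 < N -> i2 < N -> (Fz i2 < Fz i1) = Pz i1 i2.
Proof.
move=> h1 h2; rewrite /Fz ltnS.
case p12: (Pz i1 i2).
  apply: (@count_strict _ _ _ _ i2).
  - by move=> j hj; apply: Pz_trans p12 hj.
  - by rewrite mem_iota.
  - exact: p12.
  - by rewrite Pz_irr.
apply/negbTE; rewrite -leqNgt.
case: (eqVneq i1 i2) => [->//|ne].
have := Pz_total ne; rewrite p12 /= => p21.
apply: sub_count => j hj; exact: Pz_trans p21 hj.
Qed.
End ZetaOrder.


Definition cst x y :=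
  if odd x != odd y then 1
  else if (odd x && (x < y)) || (~~ odd x && (y < x)) then 0 else 2.
Fixpoint cs x u := if u is y :: u' then cst x y + cs y u' else 0.
Fixpoint noadj (x : nat) (u : seq nat) : bool := if u is y :: u' then (x != y) && noadj y u' else true.

Lemma cst_pair x y : x != y -> cst x y + cst x.+1 y.+1 = 2.
Proof.
move=> /eqP ne; rewrite /cst /= !ltnS.
case: (ltngtP x y) => h //; case: (odd x); case: (odd y) => //=.
Qed.

Lemma cs_pair x u : noadj x u -> cs x u + cs x.+1 (map succn u) = 2 * size u.
Proof.
elim: u x => [|y u IH] x //= /andP[ne na].
have := cst_pair ne; have := IH _ na; lia.
Qed.

Lemma cst0 y : cst 0 y + cst 0 y.+1 = 3.
Proof. by rewrite /cst /=; case: (odd y). Qed.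

Lemma index_lt_sorted (T : eqType) (r : rel T) s x y :
  transitive r -> irreflexive r -> sorted r s -> x \in s -> y \in s -> r x y ->
  index x s < index y s.
Proof.
move=> tr irr so xs ys rxy; rewrite ltnNge; apply/negP; rewrite leq_eqVlt => /orP[/eqP e|lt].
  have exy : x = y by rewrite -(nth_index x xs) -e nth_index.
  by move: rxy; rewrite exy irr.
have ryx := sorted_ltn_index tr so y x ys xs lt.
by move: (tr _ _ _ rxy ryx); rewrite irr.
Qed.

Lemma sub_pivot (T : eqType) (y : T) (u l r : seq T) :
  y \in l -> subseq u (drop (index y l).+1 l ++ r) -> subseq (y :: u) (l ++ r).
Proof.
move=> yl h; rewrite -(cat_take_drop (index y l) l) (drop_nth y); last by rewrite index_mem.
rewrite nth_index // -catA cat_cons.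
apply: subseq_trans (suffix_subseq _ _).
by rewrite /= eqxx.
Qed.

Lemma sub_pivot_drop (T : eqType) (y : T) (u s r : seq T) k :
  y \in s -> k <= index y s -> subseq u (drop (index y s).+1 s ++ r) ->
  subseq (y :: u) (drop k s ++ r).
Proof.
move=> ys hk h.
have ilt : index y s < size s by rewrite index_mem.
have hs : index y s = if y \in take k s then index y (take k s)
                      else size (take k s) + index y (drop k s)
  by rewrite -index_cat cat_take_drop.
have stk : size (take k s) = k by rewrite size_take; case: ifP => //; lia.
case yt: (y \in take k s) hs => hs.
  have := index_mem y (take k s); rewrite yt stk; lia.
have yd : y \in drop k s by move: ys; rewrite -{1}(cat_take_drop k s) mem_cat yt.
apply: sub_pivot => //.
by rewrite drop_drop; move: h; rewrite hs stk; congr (subseq _ (drop _ _ ++ _)); lia.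
Qed.


Section Embed.
Variable n : nat.

Lemma mem_zrun k y : (y \in zrun n k) = (0 < y <= n) && (odd y == odd k).
Proof.
rewrite /zrun; case: ifP => hk.
  rewrite mem_filter mem_iota; case: (odd y) => /=; lia.
rewrite mem_rev mem_filter mem_iota; case: (odd y) => /=; lia.
Qed.

Lemma zrun_sorted_odd k : odd k -> sorted ltn (zrun n k).
Proof. by move=> hk; rewrite /zrun hk; apply: sorted_filter => //; [exact: ltn_trans | exact: iota_ltn_sorted]. Qed.

Lemma zrun_sorted_even k : ~~ odd k -> sorted (fun a b => b < a) (zrun n k).
Proof.
move=> hk; rewrite /zrun (negbTE hk) rev_sorted.
by apply: sorted_filter => //; [exact: ltn_trans | exact: iota_ltn_sorted].
Qed.

Lemma embed u : forall t x,
  ((t == 0) && (x == 0)) || ((0 < t <= n) && (x \in zrun n t)) ->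
  all (fun y => 0 < y <= n) u -> t + cs x u <= n ->
  subseq u (drop (index x (zrun n t)).+1 (zrun n t) ++
            flatten [seq zrun n k | k <- iota t.+1 (n - t)]).
Proof.
elim: u => [|y u IH] t x hinv; first by rewrite sub0seq.
move=> /= /andP[hy hall] hcs.
have par : odd x = odd t.
  case/orP: hinv => [/andP[/eqP -> /eqP ->] //|/andP[_]].
  by rewrite mem_zrun => /andP[_ /eqP].
case hc: (cst x y) hcs => [|[|[|c]]] hcs.
- (* same run *)
  move: hc; rewrite /cst; case: ifP => // hp; case: ifP => // hdir _.
  move/negbFE/eqP: hp => hp.
  have tpos : (0 < t <= n) && (x \in zrun n t).
    case/orP: hinv => // /andP[/eqP t0 /eqP x0].
    by move: hdir; rewrite x0 /= ltn0 /=; case: (odd y).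
  case/andP: tpos => ht xt.
  have yt : y \in zrun n t by rewrite mem_zrun hy -hp par eqxx.
  apply: (@sub_pivot_drop _ y u _ _ (index x (zrun n t)).+1) => //.
    case ot: (odd t).
      apply: (index_lt_sorted (r := ltn)) => //.
      + exact: ltn_trans.
      + by move=> a; rewrite /= ltnn.
      + exact: zrun_sorted_odd.
      + by move: hdir; rewrite par ot /= ?orbF.
    apply: (index_lt_sorted (r := fun a b => b < a)) => //.
    + by move=> a b c' h1 h2; apply: ltn_trans h2 h1.
    + by move=> a; rewrite /= ltnn.
    + by apply: zrun_sorted_even; rewrite ot.
    + by move: hdir; rewrite par ot /=.
  apply: IH => //; first by rewrite ht yt orbT.
- (* next run *)
  move: hc; rewrite /cst; case: ifP => [hp _|hp]; last by case: ifP.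
  have tn : t < n by lia.
  rewrite (_ : n - t = (n - t.+1).+1); last by lia.
  rewrite /= -/(iota t.+2 _).
  apply: subseq_trans (suffix_subseq _ _).
  have yt : y \in zrun n t.+1.
    by rewrite mem_zrun hy /=; move: hp; rewrite par; case: (odd y); case: (odd t).
  apply: sub_pivot => //.
  apply: IH => //; last by lia.
  by rewrite yt tn orbT.
- (* skip one run *)
  move: hc; rewrite /cst; case: ifP => // hp; case: ifP => // hdir _.
  move/negbFE/eqP: hp => hp.
  have tn : t.+1 < n by lia.
  rewrite (_ : n - t = (n - t.+2).+2); last by lia.
  rewrite /= -/(iota t.+3 _) catA.
  apply: subseq_trans (suffix_subseq _ _).
  have yt : y \in zrun n t.+2 by rewrite mem_zrun hy /= -hp par; case: (odd t).
  apply: sub_pivot => //.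
  apply: IH => //; last by lia.
  by rewrite yt tn orbT.
- move: hc; rewrite /cst; case: ifP => //; case: ifP => //.
Qed.
End Embed.


Lemma final n p (g : nat -> nat) :
  subseq (map g p) (z_word n) ->
  (forall r1 r2, r1 < size p -> r2 < size p ->
     (nth 0 p r2 < nth 0 p r1) =
     (g (nth 0 p r2) < g (nth 0 p r1)) || ((g (nth 0 p r2) == g (nth 0 p r1)) && (r1 < r2))) ->
  contains (zeta n) p.
Proof.
move=> /subseqP [m sm hm] H.
set z := z_word n in sm hm.
set N := size z.
have zE : zeta n = map (Fz (nth 0 z) N) (iota 0 N) by [].
set idx := mask m (iota 0 N).
have hz : map g p = map (nth 0 z) idx.
  by rewrite hm /idx map_mask -/(mkseq _ _) mkseq_nth.
have sidx : size idx = size p.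
  by rewrite -(size_map g p) hz size_map.
have idxN r : r < size p -> nth 0 idx r < N.
  move=> hr; have : nth 0 idx r \in idx by rewrite mem_nth // sidx.
  by move/mem_mask; rewrite mem_iota.
have gz r : r < size p -> g (nth 0 p r) = nth 0 z (nth 0 idx r).
  move=> hr; rewrite -(nth_map 0 0 g hr) hz (nth_map 0) // sidx //.
have so : sorted ltn idx by apply: sorted_mask; [exact: ltn_trans | exact: iota_ltn_sorted].
have ordi r1 r2 : r1 < size p -> r2 < size p -> (nth 0 idx r1 < nth 0 idx r2) = (r1 < r2).
  move=> h1 h2; case: (ltnP r1 r2) => h.
    by apply: (sorted_ltn_nth ltn_trans 0 so); rewrite ?inE ?sidx.
  apply/negbTE; rewrite -leqNgt; move: h; rewrite leq_eqVlt => /orP[/eqP->//|h].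
  by apply: ltnW; apply: (sorted_ltn_nth ltn_trans 0 so); rewrite ?inE ?sidx.
exists m; split; first by rewrite zE size_map size_iota.
rewrite zE -map_mask -/idx /order_iso size_map sidx eqxx /=.
apply/forallP => i; apply/forallP => j; apply/eqP.
rewrite !(nth_map 0) ?sidx //.
rewrite Fz_lt ?idxN // /Pz -!gz // ordi //; exact/esym/H.
Qed.


Lemma noadjP x s :
  (forall i, i.+1 < size (x :: s) -> nth 0 (x :: s) i != nth 0 (x :: s) i.+1) -> noadj x s.
Proof.
elim: s x => [|y s IH] x //= H; apply/andP; split.
  by apply: (H 0).
by apply: IH => i hi; apply: (H i.+1).
Qed.

Theorem proposition6p1 (n : nat) (p : seq nat) :
  1 <= n -> is_perm n p -> has_distant_inv_descent p -> contains (zeta n) p.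
Proof.
move=> n1 hperm [j [k [hjk [hk hval]]]].
have sp : size p = n by rewrite (perm_size hperm) size_iota.
have up : uniq p by rewrite (perm_uniq hperm) iota_uniq.
have memp v : (v \in p) = (0 < v <= n) by rewrite (perm_mem hperm) mem_iota; lia.
have rng r : r < size p -> 0 < nth 0 p r <= n by move=> hr; rewrite -memp mem_nth.
set a := nth 0 p k in hval.
have hj : j < size p by lia.
have ha := rng k hk; have haj := rng j hj; rewrite -/a hval in haj; rewrite -/a in ha.
have inj r1 r2 : r1 < size p -> r2 < size p -> nth 0 p r1 = nth 0 p r2 -> r1 = r2.
  by move=> h1 h2 e; apply/eqP; rewrite -(nth_uniq 0 h1 h2 up) e.
have isj r : r < size p -> nth 0 p r = a.+1 -> r = j by move=> hr e; apply: inj => //; rewrite e hval.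
have isk r : r < size p -> nth 0 p r = a -> r = k by move=> hr e; apply: inj.
pose f v := if v <= a then v else v.-1.
have key r1 r2 : r1 < size p -> r2 < size p ->
    f (nth 0 p r1) = f (nth 0 p r2) -> r1 = r2 \/ (r1 = j /\ r2 = k) \/ (r1 = k /\ r2 = j).
  move=> h1 h2; have := rng _ h1; have := rng _ h2; have := inj _ _ h1 h2;
  have := isj _ h1; have := isj _ h2; have := isk _ h1; have := isk _ h2.
  rewrite /f; case: ifP; case: ifP; lia.
have ord sh r1 r2 : r1 < size p -> r2 < size p ->
     (nth 0 p r2 < nth 0 p r1) =
     (f (nth 0 p r2) + sh < f (nth 0 p r1) + sh) ||
     ((f (nth 0 p r2) + sh == f (nth 0 p r1) + sh) && (r1 < r2)).
  move=> h1 h2; have := rng _ h1; have := rng _ h2; have := inj _ _ h1 h2;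
  have := isj _ h1; have := isj _ h2; have := isk _ h1; have := isk _ h2.
  rewrite /f; case: ifP; case: ifP;
  case: (ltngtP (nth 0 p r2) (nth 0 p r1)) => //=; lia.
have emb (u : seq nat) : all (fun y => 0 < y <= n) u -> cs 0 u <= n -> subseq u (z_word n).
  move=> h1 h2; have := @embed n u 0 0 isT h1 h2.
  rewrite subn0 drop_oversize // memNindex //; last by rewrite mem_zrun.
have allw sh : sh <= 1 -> all (fun y => 0 < y <= n) (map (fun v => f v + sh) p).
  move=> hsh; apply/allP => y /mapP [v vp ->]; move: vp; rewrite memp => hv.
  rewrite /f; case: ifP; lia.
have [y [s ep]] : exists y s, p = y :: s.
  case: (p) sp => [|y s] h; last by exists y, s.
  by move: h; rewrite /=; lia.
have nad : noadj (f y) (map f s).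
  apply: noadjP => i hi.
  have e : f y :: map f s = map f p by rewrite ep.
  rewrite e in hi *; move: hi; rewrite size_map => hi.
  rewrite !(nth_map 0) //; last by lia.
  apply/eqP => e2; have := key _ _ (ltnW hi) hi e2; lia.
have hsum : cs 0 (map (fun v => f v + 0) p) + cs 0 (map (fun v => f v + 1) p) = 2 * n + 1.
  have -> : map (fun v => f v + 0) p = map f p by apply: eq_map => v; rewrite addn0.
  have -> : map (fun v => f v + 1) p = map succn (map f p)
    by rewrite -map_comp; apply: eq_map => v; rewrite addn1.
  rewrite ep /=.
  have := cst0 (f y); have := cs_pair nad; rewrite size_map.
  have : size s = n.-1 by move: sp; rewrite ep /=; lia.
  lia.
have [sh [hsh hcs]] : exists sh, sh <= 1 /\ cs 0 (map (fun v => f v + sh) p) <= n.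
  case: (leqP (cs 0 (map (fun v => f v + 0) p)) n) => h.
    by exists 0.
  by exists 1; split => //; lia.
apply: (@final n p (fun v => f v + sh)).
  by apply: emb => //; apply: allw.
by move=> r1 r2 h1 h2; apply: ord.
Qed.
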